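(* Let $(\mathbf{M},\mathcal{B},\mu,f)$ be a measure preserving system and $\varphi:\mathbf{M}\to\mathbb{R}\cup\{\pm\infty\}$ a continuous function. Let $X_j=\varphi\circ f^j$. Let $(u_n)$ be a non-decreasing sequence of real numbers and $(w_n)$ a non-decreasing sequence of integers such that $w_n\,\mu(X_0>u_n)\to\tau$ as $n\to\infty$ for some real number $\tau>0$. Put $U_n=\{X_0>u_n\}$. Then the following statements are equivalent: (1) there exists a probability distribution $m$ on $\mathbb{N}_0$ such that $\mu(\xi^{w_n}_{u_n}=k)\to m(\{k\})$ as $n\to\infty$ for every $k\in\mathbb{N}_0$; (2) there exists a probability distribution $m$ on $\mathbb{N}_0$ such that $\mu\big(\zeta^{\tau/\mu(U_n)}_{U_n}=k\big)\to m(\{k\})$ as $n\to\infty$ for every $k\in\mathbb{N}_0$.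
   Context: Here $\mathbf{M}$ is a compact Riemannian manifold, $f$ a differentiable map, $\mathcal B$ the Borel $\sigma$-algebra and $\mu$ an $f$-invariant probability measure. The rare event process is $\xi^N_{u_n}=\sum_{k=0}^{N-1}\mathbb{I}_{\{X_k>u_n\}}$, and for a set $U$ and $N>0$ the entry count is $\zeta^N_U=\sum_{0\le k<N}\mathbb{I}_U\circ f^k$ (for non-integer $N$ the sum runs over integers $0\le k<N$). $\mathbb I$ denotes the indicator function. *)

(* Defs.v *)
From HB Require Import structures.
From mathcomp Require Import all_boot all_order all_algebra.
From mathcomp Require Import all_classical all_reals all_analysis.
Set Implicit Arguments. Unset Strict Implicit. Unset Printing Implicit Defensive.
Import Order.TTheory GRing.Theory Num.Theory.
Local Open Scope classical_set_scope.
Local Open Scope ring_scope.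

Notation borelType M := (g_sigma_algebraType (@open M%type)) (only parsing).

(* zeta^N_U (x) = sum over integers 0 <= k < N of 1_U(f^k x), for real N.
   For nat k, (k < N) forces k < `|ceil N|, so the finite range is enough. *)
Definition entry_count {T : Type} {R : realType} (f : T -> T) (U : set T)
    (N : R) (x : T) : nat :=
  \sum_(k < `|Num.ceil N|%N) (((k%:R : R) < N)%R && (iter k f x \in U) : nat).

Definition rare_event_count {T : Type} {R : realType} (f : T -> T)
    (phi : T -> \bar R) (u : R) (N : int) (x : T) : nat :=
  entry_count f [set y | (u%:E < phi y)%E] (N%:~R : R) x.

(* Main.v *)
Require Import Defs.
From HB Require Import structures.
From mathcomp Require Import all_boot all_order all_algebra.
From mathcomp Require Import all_classical all_reals all_analysis.
From mathcomp Require Import zify ring lra.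
Import Order.TTheory GRing.Theory Num.Theory.
Import numFieldNormedType.Exports.
Local Open Scope classical_set_scope.
Local Open Scope ring_scope.

Lemma open_meas (M : ptopologicalType) (U : set M) :
  open U -> measurable (U : set (borelType M)).
Proof. by move=> oU; apply: sub_sigma_algebra. Qed.

Lemma iter_cont (M : ptopologicalType) (f : M -> M) k :
  continuous f -> continuous (iter k f).
Proof.
move=> cf; elim: k => [|k IH] /=; first by move=> x.
move=> x; exact: (continuous_comp (IH x) (cf _)).
Qed.

Lemma open_iter (M : ptopologicalType) (f : M -> M) k (U : set M) :
  continuous f -> open U -> open ((iter k f) @^-1` U).
Proof. move=> cf oU; apply: open_comp => // x _; exact: iter_cont. Qed.

Lemma iter_inv (R : realType) (M : ptopologicalType)
  (mu : probability (borelType M) R) (f : M -> M) k (U : set M) :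
  continuous f -> 
  (forall A : set (borelType M), measurable A -> mu (f @^-1` A) = mu A) ->
  open U -> mu ((iter k f) @^-1` U) = mu U.
Proof.
move=> cf inv oU; elim: k => [//|k IH].
have -> : (iter k.+1 f) @^-1` U = f @^-1` ((iter k f) @^-1` U).
  by apply/seteqP; split => x; rewrite /preimage /= -iterS iterSr.
by rewrite inv //; apply: open_meas; apply: open_iter.
Qed.
Definition Scount {T : Type} (f : T -> T) (U : set T) (a : nat) (x : T) : nat :=
  \sum_(0 <= k < a) (iter k f x \in U : nat).

Lemma entry_countE {T : Type} {R : realType} (f : T -> T) (U : set T) (N : R) x :
  0 <= N -> entry_count f U N x = Scount f U `|Num.ceil N|%N x.
Proof.
move=> N0; rewrite /entry_count /Scount big_mkord; apply: eq_bigr => k _.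
have c0 : 0 <= Num.ceil N by rewrite ceil_ge0 (lt_le_trans _ N0) // ltrN10.
have : (k%:Z < (`|Num.ceil N|%N)%:Z)%R by rewrite ltz_nat ltn_ord.
rewrite gez0_abs //.
by rewrite ceil_gt_int -pmulrn => ->.
Qed.

Lemma Scount_diff {T : Type} (f : T -> T) (U : set T) a b x :
  Scount f U a x <> Scount f U b x ->
  exists k, (minn a b <= k < maxn a b)%N /\ U (iter k f x).
Proof.
wlog ab : a b / (a <= b)%N.
  move=> H ne; case: (leqP a b) => [ab|/ltnW ba].
    by have := H a b ab ne; rewrite (minn_idPl ab) (maxn_idPr ab).
  have := H b a ba (fun e => ne (esym e)).
  by rewrite (minn_idPl ba) (maxn_idPr ba).
move/minn_idPl: (ab) => ->; move/maxn_idPr: (ab) => ->.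
rewrite /Scount [\sum_(0 <= k < b) _](big_cat_nat (n:=a)) //= => ne.
apply: contrapT => nh; apply: ne.
have -> : (\sum_(a <= i < b) (iter i f x \in U : nat))%N = 0%N.
  rewrite big_nat_cond big1 // => k; rewrite andbT => /andP[k1 k2].
  case: (boolP (iter k f x \in U)) => //.
  by rewrite in_setE => hU; exfalso; apply: nh; exists k; split => //; rewrite k1 k2.
by rewrite addr0.
Qed.

Definition Gset {T : Type} (f : T -> T) (U : set T) (c d : nat) : set T :=
  [set x | exists k, (c <= k < c + d)%N /\ U (iter k f x)].

Lemma GsetS {T : Type} (f : T -> T) (U : set T) c d :
  Gset f U c d.+1 = Gset f U c d `|` (iter (c + d) f) @^-1` U.
Proof.
apply/seteqP; split => x /=.
  move=> [k [/andP[k1 k2] hk]]; rewrite addnS ltnS leq_eqVlt in k2.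
  case/orP: k2 => [/eqP <-|k2]; [by right|left; by exists k; rewrite k1 k2].
case=> [[k [/andP[k1 k2] hk]]|hx].
  by exists k; rewrite k1 addnS ltnS ltnW.
by exists (c + d); rewrite leq_addr addnS ltnS leqnn.
Qed.

Lemma Gset0 {T : Type} (f : T -> T) (U : set T) c : Gset f U c 0 = set0.
Proof.
apply/seteqP; split => x //= [k [/andP[k1 k2] _]].
by move: (leq_ltn_trans k1 k2); rewrite addn0 ltnn.
Qed.

Lemma open_Gset (M : ptopologicalType) (f : M -> M) (U : set M) c d :
  continuous f -> open U -> open (Gset f U c d).
Proof.
move=> cf oU; elim: d => [|d IH]; first by rewrite Gset0; exact: open0.
by rewrite GsetS; apply: openU => //; apply: open_iter.
Qed.

Lemma mu_Gset (R : realType) (M : ptopologicalType)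
  (mu : probability (borelType M) R) (f : M -> M) (U : set M) c d :
  continuous f ->
  (forall A : set (borelType M), measurable A -> mu (f @^-1` A) = mu A) ->
  open U -> (mu (Gset f U c d) <= (d%:R * fine (mu U))%:E)%E.
Proof.
move=> cf inv oU; elim: d => [|d IH].
  by rewrite Gset0 measure0 mul0r.
have mUf := fin_num_measure mu U (open_meas _ _ oU).
have e : (mu (iter (c + d)%N f @^-1` U) <= (fine (mu U))%:E)%E.
  by rewrite (iter_inv _ _ mu f _ U cf inv oU) fineK.
rewrite GsetS; apply: le_trans (measureU2 _ _ _) _.
- by apply: open_meas; apply: open_Gset.
- by apply: open_meas; apply: open_iter.
apply: le_trans (leeD IH e) _.
by rewrite -EFinD lee_fin -addn1 natrD mulrDl mul1r.
Qed.

Lemma meas_Scount (M : ptopologicalType) (f : M -> M) (U : set M) a k :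
  continuous f -> open U ->
  measurable ([set x | Scount f U a x = k] : set (borelType M)).
Proof.
move=> cf oU; elim: a k => [|a IH] k.
  rewrite /Scount; case: k => [|k].
    have -> : [set x | (\sum_(0 <= k < 0) (iter k f x \in U))%N = 0%N] = setT.
      by apply/seteqP; split => x //= _; rewrite big_geq.
    exact: measurableT.
  have -> : [set x | (\sum_(0 <= k < 0) (iter k f x \in U))%N = k.+1] = set0.
    by apply/seteqP; split => x //=; rewrite big_geq.
  exact: measurable0.
have mP : measurable ((iter a f) @^-1` U : set (borelType M)).
  by apply: open_meas; apply: open_iter.
case: k => [|k].
  have -> : [set x | Scount f U a.+1 x = 0%N] =
      [set x | Scount f U a x = 0%N] `&` ~` ((iter a f) @^-1` U).
    apply/seteqP; split => x /=; rewrite /Scount big_nat_recr //=.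
      case: (boolP (iter a f x \in U)); rewrite ?in_setE.
        by move=> _; rewrite addn1.
      by rewrite notin_setE addn0.
    case=> -> h; have /negbTE -> : iter a f x \notin U by rewrite notin_setE.
    by rewrite addn0.
  by apply: measurableI => //; apply: measurableC.
have -> : [set x | Scount f U a.+1 x = k.+1] =
    ([set x | Scount f U a x = k.+1] `&` ~` ((iter a f) @^-1` U)) `|`
    ([set x | Scount f U a x = k] `&` ((iter a f) @^-1` U)).
  apply/seteqP; split => x /=; rewrite /Scount big_nat_recr //=.
    case: (boolP (iter a f x \in U)); rewrite ?in_setE.
      by move=> hU; rewrite addn1 => -[] ->; right.
    by rewrite notin_setE addn0 => h ->; left.
  case=> [[-> h]|[-> h]].
    have /negbTE -> : iter a f x \notin U by rewrite notin_setE.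
    by rewrite addn0.
  by rewrite mem_set // addn1.
by apply: measurableU; apply: measurableI => //; apply: measurableC.
Qed.

Lemma mu_Scount_le (R : realType) (M : ptopologicalType)
  (mu : probability (borelType M) R) (f : M -> M) (U : set M) a b k :
  continuous f ->
  (forall A : set (borelType M), measurable A -> mu (f @^-1` A) = mu A) ->
  open U ->
  (mu [set x | Scount f U a x = k] <= mu [set x | Scount f U b x = k] +
     (((maxn a b - minn a b)%N%:R * fine (mu U)))%:E)%E.
Proof.
move=> cf inv oU.
have mnx : (minn a b <= maxn a b)%N by apply: leq_trans (geq_minl a b) (leq_maxl a b).
have sub : [set x | Scount f U a x = k] `<=`
    [set x | Scount f U b x = k] `|` Gset f U (minn a b) (maxn a b - minn a b).
  move=> x /= hx; case: (eqVneq (Scount f U b x) k) => [->|ne]; first by left.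
  right; have [j [/andP[j1 j2] hj]] : exists j, (minn a b <= j < maxn a b)%N /\ U (iter j f x).
    by apply: Scount_diff; rewrite hx => /esym/eqP; rewrite (negbTE ne).
  by exists j; rewrite j1 subnKC.
have mA := meas_Scount _ f U a k cf oU.
have mB := meas_Scount _ f U b k cf oU.
have mG : measurable (Gset f U (minn a b) (maxn a b - minn a b) : set (borelType M)).
  by apply: open_meas; apply: open_Gset.
apply: le_trans (le_measure mu (mem_set mA) (mem_set (measurableU _ _ mB mG)) sub) _.
apply: le_trans (measureU2 _ mB mG) _.
by apply: leeD2l; apply: mu_Gset.
Qed.

Lemma dist_Scount (R : realType) (M : ptopologicalType)
  (mu : probability (borelType M) R) (f : M -> M) (U : set M) a b k :
  continuous f ->
  (forall A : set (borelType M), measurable A -> mu (f @^-1` A) = mu A) ->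
  open U ->
  `|fine (mu [set x | Scount f U a x = k]) - fine (mu [set x | Scount f U b x = k])|
    <= (maxn a b - minn a b)%N%:R * fine (mu U).
Proof.
move=> cf inv oU.
have fA := fin_num_measure mu _ (meas_Scount _ f U a k cf oU).
have fB := fin_num_measure mu _ (meas_Scount _ f U b k cf oU).
have h1 := mu_Scount_le _ _ mu f U a b k cf inv oU.
have h2 := mu_Scount_le _ _ mu f U b a k cf inv oU.
rewrite maxnC minnC in h2.
rewrite -(fineK fA) -(fineK fB) -EFinD lee_fin in h1.
rewrite -(fineK fA) -(fineK fB) -EFinD lee_fin in h2.
by rewrite ler_distl h1 andbT lerBlDr.
Qed.
Lemma transfer (R : realType) (a b e : nat -> R) (l : R) :
  a @ \oo --> l -> e @ \oo --> (0:R) ->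
  (\forall n \near \oo, `|a n - b n| <= e n) -> b @ \oo --> l.
Proof.
move=> /cvgrPdist_le ha /cvgrPdist_le he hab; apply/cvgrPdist_le => eps e0.
have e2 : 0 < eps / 2 by rewrite divr_gt0.
near=> n.
rewrite [eps]splitr; apply: le_trans (ler_distD (a n) _ _) _.
apply: lerD; first by near: n; apply: ha.
apply: (@le_trans _ _ (e n)); first by near: n.
near: n; move: (he _ e2); apply: filterS => m.
rewrite sub0r normrN; apply: le_trans (ler_norm _).
Unshelve. all: end_near.
Qed.
Arguments transfer {R a b e l}.

Lemma ev_const (p : nat -> nat) (B n0 : nat) :
  (forall m n, (n0 <= m)%N -> (m <= n)%N -> (p m <= p n)%N) ->
  (forall n, (n0 <= n)%N -> (p n <= B)%N) ->
  exists n1, (n0 <= n1)%N /\ forall n, (n1 <= n)%N -> p n = p n1.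
Proof.
move=> hp hB.
suff: forall k n0', (n0 <= n0')%N -> (B - p n0' <= k)%N ->
    exists n1, (n0 <= n1)%N /\ forall n, (n1 <= n)%N -> p n = p n1.
  by move=> /(_ (B - p n0)%N n0 (leqnn _) (leqnn _)).
elim=> [|k IH] n0' h0 hk.
  exists n0'; split => // n hn; apply/eqP; rewrite eqn_leq (hp _ _ h0 hn) andbT.
  apply: leq_trans (hB _ (leq_trans h0 hn)) _.
  by rewrite -subn_eq0 -leqn0.
case: (pselect (exists n, (n0' <= n)%N /\ p n <> p n0')) => [[n [hn hne]]|H]; last first.
  exists n0'; split => // n hn; apply: contrapT => ne; apply: H; by exists n.
apply: (IH n (leq_trans h0 hn)).
have hpn := hp _ _ h0 hn.
have hbn := hB n (leq_trans h0 hn).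
have lt : (p n0' < p n)%N by rewrite ltn_neqAle hpn andbT; apply/eqP => e; apply: hne.
lia.
Qed.

Lemma distnR (R : numDomainType) (a b : nat) :
  ((maxn a b - minn a b)%N%:R : R) = `|a%:R - b%:R|.
Proof.
case: (leqP a b) => h.
  by rewrite natrB // distrC ger0_norm // subr_ge0 ler_nat.
by rewrite natrB ?(ltnW h) // ger0_norm // subr_ge0 ler_nat ltnW.
Qed.

Lemma cvg_ex (R : realType) (x : nat -> R) (l : R) :
  x @ \oo --> l -> forall eps, 0 < eps ->
  exists N, forall n, (N <= n)%N -> `|l - x n| <= eps.
Proof.
move=> /cvgrPdist_le h eps e0; have [N _ HN] := h eps e0.
by exists N => n hn; apply: HN.
Qed.
Arguments cvg_ex {R x l}.

Lemma natr_abs (R : numDomainType) (z : int) : 0 <= z -> ((`|z|%N)%:R : R) = z%:~R.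
Proof. by move=> h; rewrite -[in RHS](gez0_abs h) -pmulrn. Qed.

Lemma asym (R : realType) (w : nat -> int) (mu : nat -> R) (tau : R) :
  0 < tau -> {homo w : m n / (m <= n)%N >-> m <= n} ->
  (forall n, 0 <= mu n) -> (forall m n, (m <= n)%N -> mu n <= mu m) ->
  (fun n => (w n)%:~R * mu n) @ \oo --> tau ->
  (fun n => (maxn `|w n|%N `|Num.ceil (tau / mu n)|%N
             - minn `|w n|%N `|Num.ceil (tau / mu n)|%N)%N%:R * mu n) @ \oo --> (0:R).
Proof.
move=> t0 hw mu0 hmu hx.
have t2 : 0 < tau / 2 by rewrite divr_gt0.
have [N1 H1] := cvg_ex hx _ t2.
have pos : forall n, (N1 <= n)%N -> 0 < mu n /\ 0 < w n.
  move=> n /H1; rewrite distrC ler_distl => /andP[h _].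
  have xp : 0 < (w n)%:~R * mu n by apply: lt_le_trans h; lra.
  have mp : 0 < mu n.
    rewrite lt_def mu0 andbT; apply/eqP => e; move: xp; rewrite e mulr0 ltxx.
    done.
  by split => //; move: xp; rewrite pmulr_lgt0 // ltr0z.
set N := fun n => tau / mu n.
have Nmu : forall n, (N1 <= n)%N -> N n * mu n = tau.
  by move=> n /pos[mp _]; rewrite /N divfK // gt_eqF.
have N0 : forall n, 0 <= N n by move=> n; rewrite /N divr_ge0 // ltW.
have qR : forall n, ((`|Num.ceil (N n)|%N)%:R : R) = (Num.ceil (N n))%:~R.
  by move=> n; rewrite natr_abs // ceil_ge0 (lt_le_trans _ (N0 n)) // ltrN10.
have qb : forall n, N n <= (Num.ceil (N n))%:~R < N n + 1.
  move=> n; rewrite ceil_ge /=; have := ceilB1_lt (N n).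
  by rewrite intrD /=; lra.
have pR : forall n, (N1 <= n)%N -> ((`|w n|%N)%:R : R) = (w n)%:~R.
  by move=> n /pos[_ wp]; rewrite natr_abs // ltW.
apply/cvgrPdist_le => eps e0.
have e2 : 0 < eps / 2 by rewrite divr_gt0.
have [N2 H2] := cvg_ex hx _ e2.
suff [N3 H3] : exists N3, forall n, (N3 <= n)%N ->
    (maxn `|w n|%N `|Num.ceil (N n)|%N - minn `|w n|%N `|Num.ceil (N n)|%N)%N%:R * mu n <= eps.
  exists N3 => // n /H3 h; rewrite sub0r normrN ger0_norm //.
  by rewrite mulr_ge0.
case: (pselect (exists n0, mu n0 < eps / 2)) => [[n0 hn0]|hB].
  exists (maxn (maxn N1 N2) n0) => n; rewrite !geq_max => /andP[/andP[h1 h2] h3].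
  rewrite distnR pR // qR.
  have hmn : mu n <= mu n0 by apply: hmu.
  have [mp _] := pos n h1.
  have e1 := H2 n h2.
  have := Nmu n h1.
  have := qb n.
  move: e1; set a := (w n)%:~R; set b := (Num.ceil (N n))%:~R; set c := N n.
  move=> e1 /andP[q1 q2] hc.
  have -> : `|a - b| * mu n = `|(a - c) * mu n + (c - b) * mu n|.
    by rewrite -mulrDl normrM (ger0_norm (ltW mp)); congr (`|_| * _); ring.
  apply: le_trans (ler_normD _ _) _.
  rewrite mulrBl hc normrM (ger0_norm (ltW mp)).
  have : `|c - b| <= 1 by rewrite ler_distl; apply/andP; split; lra.
  move=> hcb; have : `|c - b| * mu n <= mu n by rewrite -[X in _ <= X](mul1r (mu n)); apply: ler_wpM2r => //; apply: ltW.
  rewrite distrC in e1; lra.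
have cB : forall n, eps / 2 <= mu n.
  by move=> n; rewrite leNgt; apply/negP => h; apply: hB; exists n.
have [N3 H3] := cvg_ex hx _ (@ltr01 R).
pose p := fun n => `|w n|%N.
have hp : forall m n, (N1 <= m)%N -> (m <= n)%N -> (p m <= p n)%N.
  move=> m n hm hmn; rewrite /p -lez_nat !gez0_abs.
  - exact: hw.
  - by apply: le_trans (hw _ _ hmn); apply: ltW; have [] := pos m hm.
  - by apply: ltW; have [] := pos m hm.
set Bd := `|Num.ceil ((tau + 1) / (eps / 2))|%N.
have hpB : forall n, (maxn N1 N3 <= n)%N -> (p n <= Bd)%N.
  move=> n; rewrite geq_max => /andP[h1 h3].
  have [mp wp] := pos n h1.
  rewrite -(ler_nat R) /p pR // /Bd natr_abs; last first.
    rewrite ceil_ge0; apply: lt_le_trans (ltrN10 R) _.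
    by apply: divr_ge0; [lra | apply: ltW].
  apply: le_trans (ceil_ge _); rewrite ler_pdivlMr //.
  have := H3 n h3; rewrite distrC ler_distl => /andP[_ hx1].
  apply: le_trans hx1; apply: ler_wpM2l; first by rewrite ler0z ltW.
  exact: cB.
have [n1 [hn1 Hn1]] := ev_const p Bd (maxn N1 N3) (fun m n h => hp m n (leq_trans (leq_maxl _ _) h)) hpB.
have hn1' : (N1 <= n1)%N by apply: leq_trans hn1; apply: leq_maxl.
pose P := p n1.
have NP : forall n, (n1 <= n)%N -> N n <= P%:R.
  move=> n hn; rewrite leNgt; apply/negP => hlt.
  have hN1n : (N1 <= n)%N by apply: leq_trans hn.
  pose d := eps / 2 * (N n - P%:R).
  have d0 : 0 < d by rewrite /d mulr_gt0 // subr_gt0.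
  have d2 : 0 < d / 2 by rewrite divr_gt0.
  have [N4 H4] := cvg_ex hx _ d2.
  pose m := maxn n N4.
  have hnm : (n <= m)%N by apply: leq_maxl.
  have hm4 : (N4 <= m)%N by apply: leq_maxr.
  have hm1 : (n1 <= m)%N by apply: leq_trans hnm.
  have hmN1 : (N1 <= m)%N by apply: leq_trans hm1.
  have [mpm _] := pos m hmN1.
  have [mpn _] := pos n hN1n.
  have hpm : p m = P by rewrite /P Hn1.
  have xm : (w m)%:~R = (P%:R : R) by rewrite -hpm /p pR.
  have NmN : N n <= N m.
    rewrite /N ler_wpM2l ?(ltW t0) // lef_pV2 ?posrE //; exact: hmu.
  have key : d <= (N m - P%:R) * mu m.
    rewrite /d mulrC; apply: ler_pM => //.
    - by rewrite subr_ge0 ltW.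
    - by apply: ltW.
    - by rewrite lerD2r.
  have tm : tau = N m * mu m by rewrite Nmu.
  have := H4 m hm4; rewrite xm ler_distl => /andP[_ hl].
  have : tau - P%:R * mu m = (N m - P%:R) * mu m by rewrite tm; ring.
  lra.
exists (maxn n1 N2) => n; rewrite geq_max => /andP[hn hn2].
have hN1n : (N1 <= n)%N by apply: leq_trans hn.
have [mp _] := pos n hN1n.
have hpn : p n = P by rewrite /P Hn1.
have cP : Num.ceil (N n) <= P%:Z by rewrite ceil_le_int -pmulrn; apply: NP.
have hqp : (`|Num.ceil (N n)|%N <= `|w n|%N)%N.
  rewrite -lez_nat gez0_abs; last by rewrite ceil_ge0 (lt_le_trans _ (N0 n)) // ltrN10.
  by rewrite -/(p n) hpn.
rewrite (maxn_idPl hqp) (minn_idPr hqp) natrB // pR // qR.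
have hcb := qb n; move/andP: hcb => [hcb _].
have := H2 n hn2; rewrite distrC ler_distl => /andP[_ hx2].
have hc : N n * mu n = tau by apply: Nmu.
apply: (@le_trans _ _ (((w n)%:~R - N n) * mu n)).
  by apply: ler_wpM2r; [apply: ltW | rewrite lerD2l lerN2].
rewrite mulrBl hc; lra.
Qed.

Lemma ceil_intr (R : realType) (z : int) : Num.ceil (z%:~R : R) = z.
Proof. by apply: ceil_def; rewrite lexx andbT ltr_int gtrBl ltr01. Qed.

Theorem theoremC (R : realType) (M : ptopologicalType)
  (mu : probability (borelType M) R) (f : M -> M) (phi : M -> \bar R)
  (u : nat -> R) (w : nat -> int) (tau : R) :
  hausdorff_space M -> compact [set: M] ->
  continuous f ->
  (forall A : set (borelType M), measurable A -> mu (f @^-1` A) = mu A) ->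
  continuous phi ->
  {homo u : m n / (m <= n)%N >-> m <= n} ->
  {homo w : m n / (m <= n)%N >-> m <= n} ->
  0 < tau ->
  (fun n => ((w n)%:~R)%:E * mu [set x | (u n)%:E < phi x])%E @ \oo
     --> tau%:E ->
  (exists m : probability nat R, forall k : nat,
     (fun n => mu [set x | rare_event_count f phi (u n) (w n) x = k]) @ \oo
       --> m [set k])
  <->
  (exists m : probability nat R, forall k : nat,
     (fun n => mu [set x | entry_count f [set y | (u n)%:E < phi y]%E
                  (tau / fine (mu [set y | (u n)%:E < phi y]%E)) x = k]) @ \oo
       --> m [set k]).
Proof.
move=> _ _ cf inv cphi hu hw t0 hlim.
set U := fun n => [set y | ((u n)%:E < phi y)%E].
have oU : forall n, open (U n).
  move=> n; have -> : U n = phi @^-1` [set y | ((u n)%:E < y)%E] by [].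
  apply: open_comp => [x _|]; [exact: cphi | exact: open_ereal_gt_ereal].
have mU : forall n, measurable (U n : set (borelType M)) by move=> n; apply: open_meas.
pose mun := fun n => fine (mu (U n)).
have muE : forall n, mu (U n) = (mun n)%:E.
  by move=> n; rewrite /mun fineK // (fin_num_measure mu _ (mU n)).
have mun0 : forall n, 0 <= mun n by move=> n; rewrite -lee_fin -muE measure_ge0.
have munI : forall m n, (m <= n)%N -> mun n <= mun m.
  move=> m n hmn; rewrite -lee_fin -!muE; apply: le_measure; rewrite ?inE //.
  by move=> y /= hy; apply: le_lt_trans hy; rewrite lee_fin; apply: hu.
have e : (fun n => ((w n)%:~R)%:E * mu (U n))%E = (fun n => ((w n)%:~R * mun n)%:E).
  by apply: funext => n; rewrite muE EFinM.
have hx : (fun n => (w n)%:~R * mun n) @ \oo --> tau.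
  have hl2 : (fun n => ((w n)%:~R * mun n)%:E) @ \oo --> tau%:E.
    by rewrite -e; exact: hlim.
  exact: (fine_cvg hl2).
have hd := asym _ _ _ _ t0 hw mun0 munI hx.
have [N1 H1] := cvg_ex hx _ (divr_gt0 t0 (ltr0n R 2)).
have wpos : forall n, (N1 <= n)%N -> 0 <= w n.
  move=> n /H1; rewrite distrC ler_distl => /andP[h _].
  have xp : 0 < (w n)%:~R * mun n by apply: lt_le_trans h; lra.
  have mp : 0 < mun n.
    rewrite lt_def mun0 andbT; apply/eqP => e0; move: xp; rewrite e0 mulr0 ltxx.
    done.
  by move: xp; rewrite pmulr_lgt0 // ltr0z => /ltW.
have AE : forall n k, (N1 <= n)%N ->
    [set x | rare_event_count f phi (u n) (w n) x = k] =
    [set x | Scount f (U n) `|w n|%N x = k].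
  move=> n k hn; apply/seteqP; split => x /=;
    by rewrite /rare_event_count entry_countE ?ceil_intr // ler0z wpos.
have BE : forall n k,
    [set x | entry_count f (U n) (tau / fine (mu (U n))) x = k] =
    [set x | Scount f (U n) `|Num.ceil (tau / mun n)|%N x = k].
  have N0 : forall n, 0 <= tau / fine (mu (U n)).
    by move=> n; apply: divr_ge0; [exact: ltW | exact: mun0].
  move=> n k; apply/seteqP; split => x /=; rewrite entry_countE //; exact: id.
have bnd : forall k, \forall n \near \oo,
    `|fine (mu [set x | rare_event_count f phi (u n) (w n) x = k]) -
      fine (mu [set x | entry_count f (U n) (tau / fine (mu (U n))) x = k])|
    <= (maxn `|w n|%N `|Num.ceil (tau / mun n)|%N
             - minn `|w n|%N `|Num.ceil (tau / mun n)|%N)%N%:R * mun n.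
  move=> k; exists N1 => // n hn; rewrite AE // BE.
  exact: dist_Scount.
have finA : forall k, \forall n \near \oo,
    mu [set x | rare_event_count f phi (u n) (w n) x = k] \is a fin_num.
  move=> k; exists N1 => // n hn /=; rewrite AE //.
  by apply: fin_num_measure; apply: meas_Scount.
have finB : forall k, \forall n \near \oo,
    mu [set x | entry_count f (U n) (tau / fine (mu (U n))) x = k] \is a fin_num.
  move=> k; exists 0%N => // n hn /=; rewrite BE //.
  by apply: fin_num_measure; apply: meas_Scount.
split => -[m hm]; exists m => k.
- have mk : measurable [set k] by [].
  rewrite -(fineK (fin_num_measure m _ mk)); apply: cvg_EFin; first exact: finB.
  apply: (transfer (fine_cvg _) hd).
    by rewrite (fineK (fin_num_measure m _ mk)); apply: hm.
  exact: bnd.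
- have mk : measurable [set k] by [].
  rewrite -(fineK (fin_num_measure m _ mk)); apply: cvg_EFin; first exact: finA.
  apply: (transfer (fine_cvg _) hd).
    by rewrite (fineK (fin_num_measure m _ mk)); apply: hm.
  move: (bnd k); apply: filterS => n; by rewrite distrC.
Qed.
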